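(* Let $B$ be the open unit disk, let $U=(u,v)\in C^1(\overline B;\mathbb R^2)$ be harmonic in $B$, and let $\Phi=U|_{\partial B}$. Let $\tilde u$ be a harmonic conjugate of $u$ and $f=u+i\tilde u$. If $\det DU>0$ on $\partial B$, then $\mathrm{WN}(f(\partial B))=\mathrm{WN}(\Phi(\partial B))$.
   Context: Points of $\mathbb R^2$ are identified with complex numbers, $z=re^{i\theta}$. For a closed curve parameterized by $\Phi\in C^1(\partial B;\mathbb R^2)$ with $\partial\Phi/\partial\theta\neq0$ for every $\theta\in[0,2\pi]$, its winding number is the integer $\mathrm{WN}=\frac1{2\pi}\int_{\partial B}\mathrm d\,\arg\left(\frac{\partial\Phi}{\partial\theta}\right)$; $\mathrm{WN}(f(\partial B))$ is defined analogously using $\theta\mapsto f(e^{i\theta})$. *)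

(* Defs.v *)
From Stdlib Require Import Reals ZArith.
From Coquelicot Require Import Coquelicot.
Open Scope R_scope.

Definition in_B (x y : R) : Prop := x ^ 2 + y ^ 2 < 1.
Definition in_cl_B (x y : R) : Prop := x ^ 2 + y ^ 2 <= 1.
Definition on_dB (x y : R) : Prop := x ^ 2 + y ^ 2 = 1.

Definition cont_on_cl_B (w : R -> R -> R) : Prop :=
  forall x y, in_cl_B x y ->
    forall eps : R, 0 < eps -> exists delta : R, 0 < delta /\
      forall x' y', in_cl_B x' y' ->
        (x' - x) ^ 2 + (y' - y) ^ 2 < delta ^ 2 ->
        Rabs (w x' y' - w x y) < eps.

(* w ∈ C^1(closed B) with (continuously extended) partials wx, wy:
   w is continuous on the closed disk, wx, wy are its partial derivatives
   in B, and wx, wy are continuous on the closed disk. *)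
Definition C1_cl_B (w wx wy : R -> R -> R) : Prop :=
  cont_on_cl_B w /\ cont_on_cl_B wx /\ cont_on_cl_B wy /\
  forall x y, in_B x y ->
    is_derive (fun t => w t y) x (wx x y) /\
    is_derive (fun t => w x t) y (wy x y).

Definition harmonic_on_B (w : R -> R -> R) : Prop :=
  exists wx wy wxx wxy wyx wyy : R -> R -> R,
    forall x y, in_B x y ->
      is_derive (fun t => w t y) x (wx x y) /\
      is_derive (fun t => w x t) y (wy x y) /\
      is_derive (fun t => wx t y) x (wxx x y) /\
      is_derive (fun t => wx x t) y (wxy x y) /\
      is_derive (fun t => wy t y) x (wyx x y) /\
      is_derive (fun t => wy x t) y (wyy x y) /\
      continuous (fun p : R * R => wxx (fst p) (snd p)) (x, y) /\
      continuous (fun p : R * R => wxy (fst p) (snd p)) (x, y) /\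
      continuous (fun p : R * R => wyx (fst p) (snd p)) (x, y) /\
      continuous (fun p : R * R => wyy (fst p) (snd p)) (x, y) /\
      wxx x y + wyy x y = 0.

(* ut is a harmonic conjugate of u in B: u + i ut is holomorphic in B
   (complex differentiable at every point of B). *)
Definition harmonic_conjugate_on_B (u ut : R -> R -> R) : Prop :=
  forall z : C, in_B (fst z) (snd z) ->
    ex_derive (fun w : C => (u (fst w) (snd w), ut (fst w) (snd w)) : C) z.

(* WN of a closed curve theta |-> (g1 theta, g2 theta):
   the curve is C^1 on [0,2pi] with nonvanishing derivative (d1,d2), and
   k = (1/2pi) ∫ d arg(d1 + i d2), i.e. there is a continuous argument
   function phi of the tangent with phi(2pi) - phi(0) = 2 pi k. *)
Definition is_WN (g1 g2 : R -> R) (k : Z) : Prop :=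
  exists d1 d2 phi : R -> R,
    (forall t, 0 <= t <= 2 * PI ->
        is_derive g1 t (d1 t) /\ is_derive g2 t (d2 t) /\
        continuity_pt d1 t /\ continuity_pt d2 t /\
        (d1 t, d2 t) <> (0, 0)) /\
    continuity phi /\
    (forall t, 0 <= t <= 2 * PI ->
        d1 t = sqrt (d1 t ^ 2 + d2 t ^ 2) * cos (phi t) /\
        d2 t = sqrt (d1 t ^ 2 + d2 t ^ 2) * sin (phi t)) /\
    phi (2 * PI) - phi 0 = 2 * PI * IZR k.

(* Main.v *)
Require Import Defs.
From Stdlib Require Import Reals ZArith Lra Lia Psatz Ratan FunctionalExtensionality.
From Coquelicot Require Import Coquelicot.
Open Scope R_scope.

Lemma cp_eps (f : R -> R) x :
  continuity_pt f x <->
  (forall eps, 0 < eps -> exists d, 0 < d /\ forall y, Rabs (y - x) < d -> Rabs (f y - f x) < eps).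
Proof.
  split.
  - intros H eps He. destruct (H eps He) as [d [Hd Hy]].
    exists d; split; auto. intros y Hyd.
    destruct (Req_dec x y) as [<-|Hne].
    + rewrite Rminus_eq_0, Rabs_R0; auto.
    + apply (Hy y). split. split. exact I. exact Hne. exact Hyd.
  - intros H eps He. destruct (H eps He) as [d [Hd Hy]].
    exists d; split; auto. intros y [_ Hyd]. apply Hy. exact Hyd.
Qed.

Lemma cp_plus f g x : continuity_pt f x -> continuity_pt g x -> continuity_pt (fun t => f t + g t) x.
Proof. intros; exact (continuity_pt_plus f g x H H0). Qed.
Lemma cp_minus f g x : continuity_pt f x -> continuity_pt g x -> continuity_pt (fun t => f t - g t) x.
Proof. intros; exact (continuity_pt_minus f g x H H0). Qed.
Lemma cp_mult f g x : continuity_pt f x -> continuity_pt g x -> continuity_pt (fun t => f t * g t) x.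
Proof. intros; exact (continuity_pt_mult f g x H H0). Qed.
Lemma cp_opp f x : continuity_pt f x -> continuity_pt (fun t => - f t) x.
Proof. intros; exact (continuity_pt_opp f x H). Qed.
Lemma cp_div f g x : continuity_pt f x -> continuity_pt g x -> g x <> 0 -> continuity_pt (fun t => f t / g t) x.
Proof. intros; exact (continuity_pt_div f g x H H0 H1). Qed.
Lemma cp_const c x : continuity_pt (fun _ => c) x.
Proof. apply continuity_pt_const. intros a b; reflexivity. Qed.
Lemma cp_id x : continuity_pt (fun t => t) x.
Proof. apply derivable_continuous_pt. apply derivable_pt_id. Qed.
Lemma cp_comp f g x : continuity_pt f x -> continuity_pt g (f x) -> continuity_pt (fun t => g (f t)) x.
Proof. intros; exact (continuity_pt_comp f g x H H0). Qed.
Lemma cp_atan f x : continuity_pt f x -> continuity_pt (fun t => atan (f t)) x.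
Proof. intros; apply (cp_comp f atan); auto. apply derivable_continuous_pt, derivable_pt_atan. Qed.
Lemma cp_sqrt f x : continuity_pt f x -> 0 <= f x -> continuity_pt (fun t => sqrt (f t)) x.
Proof. intros; apply (cp_comp f sqrt); auto. apply continuity_pt_sqrt; auto. Qed.
Lemma cp_abs f x : continuity_pt f x -> continuity_pt (fun t => Rabs (f t)) x.
Proof. intros; apply (cp_comp f Rabs); auto. apply Rcontinuity_abs. Qed.
Lemma cp_cos f x : continuity_pt f x -> continuity_pt (fun t => cos (f t)) x.
Proof. intros; apply (cp_comp f cos); auto. apply continuity_cos. Qed.
Lemma cp_sin f x : continuity_pt f x -> continuity_pt (fun t => sin (f t)) x.
Proof. intros; apply (cp_comp f sin); auto. apply continuity_sin. Qed.
Lemma cp_pow2 f x : continuity_pt f x -> continuity_pt (fun t => f t ^ 2) x.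
Proof. intros. assert (E : (fun t => f t ^ 2) = (fun t => f t * f t)).
  { apply functional_extensionality; intro; ring. } rewrite E. apply cp_mult; auto. Qed.

Lemma half_angle x y r : r * r = x * x + y * y -> 0 < r + x -> 0 <= r ->
  cos (2 * atan (y / (r + x))) * r = x /\ sin (2 * atan (y / (r + x))) * r = y.
Proof.
  intros Hr Hp H0.
  set (z := y / (r + x)).
  assert (Hz1 : 0 < 1 + z ^ 2) by nra.
  assert (Hs : sqrt (1 + z²) * sqrt (1 + z²) = 1 + z ^ 2).
  { rewrite sqrt_sqrt. unfold Rsqr; ring. unfold Rsqr; nra. }
  assert (Hsp : 0 < sqrt (1 + z²)). { apply sqrt_lt_R0. unfold Rsqr; nra. }
  assert (Hrp : 0 < r).
  { destruct (Rle_lt_or_eq_dec 0 r H0) as [h|h]; auto. subst r. nra. }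
  assert (Hz : z * (r + x) = y). { unfold z; field; lra. }
  assert (K : (1 + z ^ 2) * (r + x) = 2 * r).
  { apply Rmult_eq_reg_l with (r + x); [|lra].
    replace ((r + x) * ((1 + z ^ 2) * (r + x))) with ((r+x)*(r+x) + (z*(r+x))*(z*(r+x))) by ring.
    rewrite Hz. nra. }
  assert (Kq : 1 + z ^ 2 = 2 * r / (r + x)). { rewrite <- K. field. lra. }
  assert (C1 : cos (2 * atan z) = 2 / (1 + z ^ 2) - 1).
  { rewrite cos_2a_cos, cos_atan.
    replace (2 * (1 / sqrt (1 + z²)) * (1 / sqrt (1 + z²))) with (2 / (sqrt (1 + z²) * sqrt (1 + z²))) by (field; lra).
    rewrite Hs. reflexivity. }
  assert (S1 : sin (2 * atan z) = 2 * z / (1 + z ^ 2)).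
  { rewrite sin_2a, cos_atan, sin_atan.
    replace (2 * (z / sqrt (1 + z²)) * (1 / sqrt (1 + z²))) with (2 * z / (sqrt (1 + z²) * sqrt (1 + z²))) by (field; lra).
    rewrite Hs. reflexivity. }
  rewrite C1, S1, Kq. split.
  - field; lra.
  - rewrite <- Hz. field; lra.
Qed.

Definition Dang (a1 a2 b1 b2 : R) : R :=
  2 * atan ((a1 * b2 - a2 * b1) /
     (sqrt (a1 ^ 2 + a2 ^ 2) * sqrt (b1 ^ 2 + b2 ^ 2) + (a1 * b1 + a2 * b2))).

Lemma REL a1 a2 b1 b2 phi :
  0 < sqrt (a1 ^ 2 + a2 ^ 2) * sqrt (b1 ^ 2 + b2 ^ 2) + (a1 * b1 + a2 * b2) ->
  0 < a1 ^ 2 + a2 ^ 2 ->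
  a1 = sqrt (a1 ^ 2 + a2 ^ 2) * cos phi ->
  a2 = sqrt (a1 ^ 2 + a2 ^ 2) * sin phi ->
  b1 = sqrt (b1 ^ 2 + b2 ^ 2) * cos (phi + Dang a1 a2 b1 b2) /\
  b2 = sqrt (b1 ^ 2 + b2 ^ 2) * sin (phi + Dang a1 a2 b1 b2).
Proof.
  intros Hden Ha Ha1 Ha2.
  set (ra := sqrt (a1 ^ 2 + a2 ^ 2)) in *.
  set (rb := sqrt (b1 ^ 2 + b2 ^ 2)) in *.
  assert (Hra : ra * ra = a1 ^ 2 + a2 ^ 2) by (apply sqrt_sqrt; nra).
  assert (Hrb : rb * rb = b1 ^ 2 + b2 ^ 2) by (apply sqrt_sqrt; nra).
  assert (Hra0 : 0 < ra) by (apply sqrt_lt_R0; auto).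
  assert (Hrb0 : 0 <= rb) by apply sqrt_pos.
  destruct (half_angle (a1 * b1 + a2 * b2) (a1 * b2 - a2 * b1) (ra * rb)) as [Hc Hs].
  { replace (ra * rb * (ra * rb)) with ((ra * ra) * (rb * rb)) by ring.
    rewrite Hra, Hrb. ring. }
  { lra. }
  { nra. }
  unfold Dang. fold ra rb. set (d := 2 * atan _) in *.
  rewrite cos_plus, sin_plus.
  split.
  - apply Rmult_eq_reg_l with (ra * ra); [|nra].
    replace (ra * ra * (rb * (cos phi * cos d - sin phi * sin d))) with
      ((ra * cos phi) * (cos d * (ra * rb)) - (ra * sin phi) * (sin d * (ra * rb))) by ring.
    rewrite Hc, Hs, <- Ha1, <- Ha2, Hra. ring.
  - apply Rmult_eq_reg_l with (ra * ra); [|nra].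
    replace (ra * ra * (rb * (sin phi * cos d + cos phi * sin d))) with
      ((ra * sin phi) * (cos d * (ra * rb)) + (ra * cos phi) * (sin d * (ra * rb))) by ring.
    rewrite Hc, Hs, <- Ha1, <- Ha2, Hra. ring.
Qed.

Ltac cont := repeat first
  [ apply cp_plus | apply cp_minus | apply cp_div | apply cp_mult | apply cp_sqrt | apply cp_opp | apply cp_pow2
  | apply cp_cos | apply cp_sin | apply cp_atan | apply cp_abs | apply cp_const | apply cp_id ].

Lemma cp_Dang a1 a2 b1 b2 x :
  continuity_pt a1 x -> continuity_pt a2 x -> continuity_pt b1 x -> continuity_pt b2 x ->
  0 < sqrt (a1 x ^ 2 + a2 x ^ 2) * sqrt (b1 x ^ 2 + b2 x ^ 2) + (a1 x * b1 x + a2 x * b2 x) ->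
  continuity_pt (fun t => Dang (a1 t) (a2 t) (b1 t) (b2 t)) x.
Proof.
  intros H1 H2 H3 H4 Hd. unfold Dang.
  cont; auto; nra.
Qed.

Lemma Dang_same a1 a2 : Dang a1 a2 a1 a2 = 0.
Proof. unfold Dang. replace (a1 * a2 - a2 * a1) with 0 by ring. unfold Rdiv. rewrite Rmult_0_l, atan_0. ring. Qed.

Lemma base_angle p q : 0 < p ^ 2 + q ^ 2 -> exists th,
  p = sqrt (p ^ 2 + q ^ 2) * cos th /\ q = sqrt (p ^ 2 + q ^ 2) * sin th.
Proof.
  intros H.
  assert (Hr : sqrt (p^2+q^2) * sqrt (p^2+q^2) = p^2+q^2) by (apply sqrt_sqrt; nra).
  assert (Hr0 : 0 <= sqrt (p^2+q^2)) by apply sqrt_pos.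
  assert (E1 : sqrt (1 ^ 2 + 0 ^ 2) = 1). { replace (1^2+0^2) with 1 by ring. apply sqrt_1. }
  destruct (Rlt_or_le 0 (sqrt (p^2+q^2) + p)) as [Hp|Hp].
  - exists (0 + Dang 1 0 p q). apply REL.
    + rewrite E1. lra.
    + lra.
    + rewrite E1, cos_0; ring.
    + rewrite E1, sin_0; ring.
  - exists PI. rewrite cos_PI, sin_PI.
    assert (q = 0) by nra. subst q. split; nra.
Qed.

Lemma Rmin_abs a b : Rmin a b = (a + b - Rabs (a - b)) / 2.
Proof. unfold Rmin; destruct (Rle_dec a b); unfold Rabs; destruct (Rcase_abs (a - b)); lra. Qed.
Lemma Rmax_abs a b : Rmax a b = (a + b + Rabs (a - b)) / 2.
Proof. unfold Rmax; destruct (Rle_dec a b); unfold Rabs; destruct (Rcase_abs (a - b)); lra. Qed.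

Lemma cp_half f x : continuity_pt f x -> continuity_pt (fun t => f t / 2) x.
Proof. intros; apply cp_div; [auto | apply cp_const | lra]. Qed.

Lemma cp_Rmin f g x : continuity_pt f x -> continuity_pt g x -> continuity_pt (fun t => Rmin (f t) (g t)) x.
Proof.
  intros. assert (E : (fun t => Rmin (f t) (g t)) = (fun t => (f t + g t - Rabs (f t - g t)) / 2)).
  { apply functional_extensionality; intro; apply Rmin_abs. }
  rewrite E. apply cp_half. cont; auto.
Qed.
Lemma cp_Rmax f g x : continuity_pt f x -> continuity_pt g x -> continuity_pt (fun t => Rmax (f t) (g t)) x.
Proof.
  intros. assert (E : (fun t => Rmax (f t) (g t)) = (fun t => (f t + g t + Rabs (f t - g t)) / 2)).
  { apply functional_extensionality; intro; apply Rmax_abs. }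
  rewrite E. apply cp_half. cont; auto.
Qed.


Lemma den_pos A B nxs nys nxt nyt :
  0 < A -> 0 < B -> nxs ^ 2 + nys ^ 2 = 1 -> nxt ^ 2 + nyt ^ 2 = 1 ->
  Rabs (nxs - nxt) < 1/2 -> Rabs (nys - nyt) < 1/2 ->
  0 < A * B + ((A * nxs) * (B * nxt) + (A * nys) * (B * nyt)).
Proof.
  intros HA HB H1 H2 Hx Hy.
  apply Rabs_def2 in Hx. apply Rabs_def2 in Hy.
  assert (0 < 1 + (nxs * nxt + nys * nyt)) by nra.
  replace (A * B + ((A * nxs) * (B * nxt) + (A * nys) * (B * nyt))) with
    (A * B * (1 + (nxs * nxt + nys * nyt))) by ring.
  apply Rmult_lt_0_compat; [nra | auto].
Qed.

Lemma lift (x y : R -> R) L :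
  (forall t, continuity_pt x t) -> (forall t, continuity_pt y t) ->
  (forall t, 0 < x t ^ 2 + y t ^ 2) -> 0 <= L ->
  exists phi, continuity phi /\
    forall t, 0 <= t <= L ->
      x t = sqrt (x t ^ 2 + y t ^ 2) * cos (phi t) /\
      y t = sqrt (x t ^ 2 + y t ^ 2) * sin (phi t).
Proof.
  intros Hx Hy Hnz HL.
  set (r := fun t => sqrt (x t ^ 2 + y t ^ 2)).
  assert (Hr : forall t, 0 < r t) by (intro; apply sqrt_lt_R0; auto).
  assert (Hrr : forall t, r t * r t = x t ^ 2 + y t ^ 2) by (intro; apply sqrt_sqrt; specialize (Hnz t); lra).
  set (nx := fun t => x t / r t). set (ny := fun t => y t / r t).
  assert (Hn : forall t, nx t ^ 2 + ny t ^ 2 = 1).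
  { intro t. unfold nx, ny. specialize (Hr t). specialize (Hrr t).
    field_simplify; [|lra]. rewrite <- Hrr. field. lra. }
  assert (Hxn : forall t, x t = r t * nx t) by (intro; unfold nx; field; specialize (Hr t); lra).
  assert (Hyn : forall t, y t = r t * ny t) by (intro; unfold ny; field; specialize (Hr t); lra).
  assert (Hcr : forall t, continuity_pt r t).
  { intro t. unfold r. apply cp_sqrt. cont; auto. specialize (Hnz t); lra. }
  assert (Hcnx : forall t, continuity_pt nx t).
  { intro t. unfold nx. apply cp_div; auto. specialize (Hr t); lra. }
  assert (Hcny : forall t, continuity_pt ny t).
  { intro t. unfold ny. apply cp_div; auto. specialize (Hr t); lra. }
  assert (Hhalf : 0 < 1/2) by lra.
  destruct (Heine_cor2 (f := nx) (a := 0) (b := L) (fun t _ => Hcnx t) (mkposreal _ Hhalf)) as [d1 Hd1].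
  destruct (Heine_cor2 (f := ny) (a := 0) (b := L) (fun t _ => Hcny t) (mkposreal _ Hhalf)) as [d2 Hd2].
  simpl in Hd1, Hd2.
  set (h := Rmin d1 d2 / 2).
  assert (Hh : 0 < h). { unfold h. apply Rmin_case; destruct d1, d2; simpl; lra. }
  assert (Key : forall s t, 0 <= s <= L -> 0 <= t <= L -> Rabs (s - t) <= h ->
     0 < sqrt (x s ^ 2 + y s ^ 2) * sqrt (x t ^ 2 + y t ^ 2) + (x s * x t + y s * y t)).
  { intros s t Hs Ht Hst. fold (r s) (r t). rewrite (Hxn s), (Hxn t), (Hyn s), (Hyn t).
    assert (Hm1 : Rmin d1 d2 <= d1) by apply Rmin_l.
    assert (Hm2 : Rmin d1 d2 <= d2) by apply Rmin_r.
    assert (0 < Rmin d1 d2) by (unfold h in Hh; lra).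
    apply den_pos; auto.
    - apply Hd1; auto. unfold h in Hst; lra.
    - apply Hd2; auto. unfold h in Hst; lra. }
  assert (Ind : forall n : nat, forall T, 0 <= T <= L -> T <= INR n * h ->
    exists phi, continuity phi /\ forall t, 0 <= t <= T ->
      x t = r t * cos (phi t) /\ y t = r t * sin (phi t)).
  { induction n as [|n IH]; intros T HT HTn.
    - simpl in HTn. assert (T = 0) by lra. subst T.
      destruct (base_angle (x 0) (y 0) (Hnz 0)) as [th Hth].
      exists (fun _ => th). split.
      + intro t. apply cp_const.
      + intros t Ht. assert (t = 0) by lra. subst t. exact Hth.
    - destruct (Rle_or_lt T (INR n * h)) as [Hle|Hlt].
      + apply IH; auto.
      + set (T0 := INR n * h).
        assert (HT0 : 0 <= T0) by (unfold T0; apply Rmult_le_pos; [apply pos_INR | lra]).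
        assert (HT0T : T0 < T) by (unfold T0; lra).
        assert (HTT0 : T - T0 <= h) by (unfold T0; rewrite S_INR in HTn; lra).
        destruct (IH T0 ltac:(lra) ltac:(unfold T0; lra)) as [phi0 [Hc0 Hl0]].
        set (clip := fun t => Rmax T0 (Rmin t T)).
        assert (Hclip : forall t, T0 <= clip t <= T).
        { intro t. unfold clip. split. apply Rmax_l.
          apply Rmax_lub; [lra | apply Rmin_r]. }
        set (g := fun t => phi0 T0 + Dang (x T0) (y T0) (x (clip t)) (y (clip t))).
        exists (fun t => phi0 (Rmin t T0) + g (Rmax t T0) - phi0 T0).
        split.
        * intro t. apply cp_minus; [|apply cp_const]. apply cp_plus.
          -- apply cp_comp. apply cp_Rmin; [apply cp_id|apply cp_const]. apply Hc0.
          -- apply cp_comp. apply cp_Rmax; [apply cp_id|apply cp_const].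
             unfold g. apply cp_plus; [apply cp_const|].
             apply (cp_Dang (fun _ => x T0) (fun _ => y T0) (fun t => x (clip t)) (fun t => y (clip t))).
             apply cp_const. apply cp_const.
             apply cp_comp; [|apply Hx]. unfold clip. apply cp_Rmax; [apply cp_const|]. apply cp_Rmin; [apply cp_id|apply cp_const].
             apply cp_comp; [|apply Hy]. unfold clip. apply cp_Rmax; [apply cp_const|]. apply cp_Rmin; [apply cp_id|apply cp_const].
             apply Key. lra. specialize (Hclip (Rmax t T0)); lra.
             specialize (Hclip (Rmax t T0)). rewrite Rabs_left1; lra.
        * intros t Ht. destruct (Rle_or_lt t T0) as [Ht0|Ht0].
          -- rewrite Rmin_left by lra. rewrite Rmax_right by lra.
             unfold g. assert (clip T0 = T0).
             { unfold clip. rewrite Rmin_left by lra. apply Rmax_left; lra. }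
             rewrite H, Dang_same. replace (phi0 t + (phi0 T0 + 0) - phi0 T0) with (phi0 t) by ring.
             apply Hl0; lra.
          -- rewrite Rmin_right by lra. rewrite Rmax_left by lra.
             unfold g. assert (clip t = t).
             { unfold clip. rewrite Rmin_left by lra. apply Rmax_right; lra. }
             rewrite H. replace (phi0 T0 + (phi0 T0 + Dang (x T0) (y T0) (x t) (y t)) - phi0 T0)
               with (phi0 T0 + Dang (x T0) (y T0) (x t) (y t)) by ring.
             apply REL.
             ++ apply Key; try lra. rewrite Rabs_left1; lra.
             ++ apply Hnz.
             ++ apply Hl0; lra.
             ++ apply Hl0; lra. }
  destruct (archimed (L / h)) as [Hup _].
  assert (Hup0 : (0 <= up (L / h))%Z).
  { apply le_IZR. assert (0 <= L / h) by (apply Rdiv_le_0_compat; lra). simpl; lra. }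
  destruct (Ind (Z.to_nat (up (L / h))) L ltac:(lra)) as [phi [Hc Hl]].
  { rewrite INR_IZR_INZ, Z2Nat.id by auto.
    apply Rmult_le_reg_r with (/ h). apply Rinv_0_lt_compat; auto.
    rewrite Rmult_assoc, Rinv_r by lra. unfold Rdiv in Hup. lra. }
  exists phi; split; auto.
Qed.


Lemma same_angle a b : cos a = cos b -> sin a = sin b -> exists k : Z, a - b = 2 * PI * IZR k.
Proof.
  intros Hc Hs.
  assert (H1 : cos (a - b) = 1).
  { rewrite cos_minus, Hc, Hs. pose proof (sin2_cos2 b). unfold Rsqr in H. lra. }
  assert (H2 : sin ((a - b) / 2) = 0).
  { replace (a - b) with (2 * ((a - b) / 2)) in H1 by field.
    rewrite cos_2a_sin in H1. nra. }
  destruct (sin_eq_0_0 _ H2) as [k Hk]. exists k. lra.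
Qed.

Lemma WN_pair (d1 d2 e2 : R -> R) :
  (forall t, continuity_pt d1 t) -> (forall t, continuity_pt d2 t) -> (forall t, continuity_pt e2 t) ->
  (forall t, 0 < d1 t ^ 2 + d2 t ^ 2) -> (forall t, 0 < d1 t ^ 2 + e2 t ^ 2) ->
  (forall t, 0 < sqrt (d1 t ^ 2 + d2 t ^ 2) * sqrt (d1 t ^ 2 + e2 t ^ 2) + (d1 t * d1 t + d2 t * e2 t)) ->
  d1 (2 * PI) = d1 0 -> d2 (2 * PI) = d2 0 -> e2 (2 * PI) = e2 0 ->
  exists (k : Z) (phi psi : R -> R),
    continuity phi /\ continuity psi /\
    (forall t, 0 <= t <= 2 * PI ->
        d1 t = sqrt (d1 t ^ 2 + d2 t ^ 2) * cos (phi t) /\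
        d2 t = sqrt (d1 t ^ 2 + d2 t ^ 2) * sin (phi t)) /\
    (forall t, 0 <= t <= 2 * PI ->
        d1 t = sqrt (d1 t ^ 2 + e2 t ^ 2) * cos (psi t) /\
        e2 t = sqrt (d1 t ^ 2 + e2 t ^ 2) * sin (psi t)) /\
    phi (2 * PI) - phi 0 = 2 * PI * IZR k /\
    psi (2 * PI) - psi 0 = 2 * PI * IZR k.
Proof.
  intros H1 H2 H3 N1 N2 Den P1 P2 P3.
  assert (HPI : 0 <= 2 * PI) by (pose proof PI_RGT_0; lra).
  destruct (lift d1 d2 (2 * PI) H1 H2 N1 HPI) as [phi [Hc Hl]].
  set (psi := fun t => phi t + Dang (d1 t) (d2 t) (d1 t) (e2 t)).
  assert (E : exists k : Z, phi (2 * PI) - phi 0 = 2 * PI * IZR k).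
  { destruct (Hl (2 * PI)) as [A1 A2]; [lra|].
    destruct (Hl 0) as [B1 B2]; [lra|].
    rewrite P1, P2 in A1, A2.
    set (r := sqrt (d1 0 ^ 2 + d2 0 ^ 2)) in *.
    assert (0 < r) by (apply sqrt_lt_R0; auto).
    apply same_angle.
    - apply Rmult_eq_reg_l with r; lra.
    - apply Rmult_eq_reg_l with r; lra. }
  destruct E as [k Hk].
  exists k, phi, psi. split; [auto|]. split.
  { intro t. unfold psi. apply cp_plus. apply Hc. apply cp_Dang; auto. }
  split; [auto|]. split.
  { intros t Ht. unfold psi. apply REL; auto. apply Hl; auto. apply Hl; auto. }
  split; auto.
  unfold psi. rewrite P1, P2, P3. lra.
Qed.


Lemma box_in_B x y a b : x ^ 2 + y ^ 2 < 1 ->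
  Rabs a < Rmin 1 ((1 - (x ^ 2 + y ^ 2)) / 8) ->
  Rabs b < Rmin 1 ((1 - (x ^ 2 + y ^ 2)) / 8) ->
  (x + a) ^ 2 + (y + b) ^ 2 < 1.
Proof.
  intros Hs Ha Hb.
  set (s := x^2+y^2) in *.
  set (m := Rmin 1 ((1 - s) / 8)) in *.
  assert (m <= 1) by apply Rmin_l. assert (m <= (1 - s)/8) by apply Rmin_r.
  apply Rabs_def2 in Ha. apply Rabs_def2 in Hb.
  assert (-1 < x < 1) by (unfold s in *; nra). assert (-1 < y < 1) by (unfold s in *; nra).
  assert (x * a < m) by nra. assert (- (x * a) < m) by nra.
  assert (y * b < m) by nra. assert (a * a < m) by nra. assert (b * b < m) by nra.
  unfold s in *. nra.
Qed.

Lemma cont_to_pt f x : ex_derive f x -> continuity_pt f x.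
Proof. intro H. apply continuity_pt_filterlim. apply (ex_derive_continuous f x H). Qed.

Lemma diff_interior w wx wy x y : C1_cl_B w wx wy -> in_B x y ->
  differentiable_pt_lim w x y (wx x y) (wy x y).
Proof.
  intros [Hw [Hwx [Hwy Hd]]] HB. unfold in_B in HB.
  intros eps.
  assert (Hcl : in_cl_B x y) by (unfold in_cl_B; lra).
  assert (He2 : 0 < eps / 2) by (destruct eps; simpl; lra).
  destruct (Hwx x y Hcl (eps / 2) He2) as [dx [Hdx Px]].
  destruct (Hwy x y Hcl (eps / 2) He2) as [dy [Hdy Py]].
  set (m := Rmin 1 ((1 - (x ^ 2 + y ^ 2)) / 8)).
  assert (Hm : 0 < m) by (unfold m; apply Rmin_case; lra).
  set (rho := Rmin m (Rmin dx dy / 2)).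
  assert (Hrho : 0 < rho) by (unfold rho; apply Rmin_case; [lra| apply Rmin_case; lra]).
  assert (Hr1 : rho <= m) by apply Rmin_l.
  assert (Hr2 : rho <= Rmin dx dy / 2) by apply Rmin_r.
  assert (Hr3 : Rmin dx dy <= dx) by apply Rmin_l.
  assert (Hr4 : Rmin dx dy <= dy) by apply Rmin_r.
  exists (mkposreal rho Hrho). simpl. intros u v Hu Hv.
  assert (InB : forall p q, Rabs (p - x) < rho -> Rabs (q - y) < rho -> in_B p q).
  { intros p q Hp Hq. unfold in_B.
    replace p with (x + (p - x)) by ring. replace q with (y + (q - y)) by ring.
    apply box_in_B; auto; fold m; lra. }
  assert (Close : forall p q, Rabs (p - x) < rho -> Rabs (q - y) < rho ->
     (p - x) ^ 2 + (q - y) ^ 2 < dx ^ 2 /\ (p - x) ^ 2 + (q - y) ^ 2 < dy ^ 2).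
  { intros p q Hp Hq. apply Rabs_def2 in Hp. apply Rabs_def2 in Hq.
    assert (E1 : (p - x) ^ 2 < rho ^ 2) by nra.
    assert (E2 : (q - y) ^ 2 < rho ^ 2) by nra.
    assert (E3 : rho ^ 2 <= (dx / 2) ^ 2) by (apply pow_incr; lra).
    assert (E4 : rho ^ 2 <= (dy / 2) ^ 2) by (apply pow_incr; lra).
    assert (E5 : (dx / 2) ^ 2 = dx ^ 2 / 4) by field.
    assert (E6 : (dy / 2) ^ 2 = dy ^ 2 / 4) by field.
    assert (0 < dx ^ 2) by (apply pow_lt; lra). assert (0 < dy ^ 2) by (apply pow_lt; lra).
    split; lra. }
  destruct (MVT_gen (fun t => w t v) x u (fun t => wx t v)) as [c [Hc Ec]].
  { intros t Ht. refine (proj1 (Hd t v _)). apply InB; auto.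
    revert Ht. apply Rmin_case; apply Rmax_case; intros; apply Rabs_def2 in Hu; apply Rabs_def1; lra. }
  { intros t Ht. apply cont_to_pt. eexists. refine (proj1 (Hd t v _)). apply InB; auto.
    revert Ht. apply Rmin_case; apply Rmax_case; intros; apply Rabs_def2 in Hu; apply Rabs_def1; lra. }
  destruct (MVT_gen (fun t => w x t) y v (fun t => wy x t)) as [d [Hdd Ed]].
  { intros t Ht. refine (proj2 (Hd x t _)). apply InB; auto. rewrite Rminus_eq_0, Rabs_R0; auto.
    revert Ht. apply Rmin_case; apply Rmax_case; intros; apply Rabs_def2 in Hv; apply Rabs_def1; lra. }
  { intros t Ht. apply cont_to_pt. eexists. refine (proj2 (Hd x t _)). apply InB; auto. rewrite Rminus_eq_0, Rabs_R0; auto.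
    revert Ht. apply Rmin_case; apply Rmax_case; intros; apply Rabs_def2 in Hv; apply Rabs_def1; lra. }
  simpl in Ec, Ed.
  assert (Hcx : Rabs (c - x) < rho).
  { revert Hc. apply Rmin_case; apply Rmax_case; intros; apply Rabs_def2 in Hu; apply Rabs_def1; lra. }
  assert (Hdy' : Rabs (d - y) < rho).
  { revert Hdd. apply Rmin_case; apply Rmax_case; intros; apply Rabs_def2 in Hv; apply Rabs_def1; lra. }
  assert (B1 : Rabs (wx c v - wx x y) < eps / 2).
  { apply Px. assert (in_B c v) by (apply InB; auto).
    unfold in_B, in_cl_B in *; lra. apply (Close c v); auto. }
  assert (B2 : Rabs (wy x d - wy x y) < eps / 2).
  { apply Py. assert (in_B x d) by (apply InB; auto; rewrite Rminus_eq_0, Rabs_R0; auto).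
    unfold in_B, in_cl_B in *; lra.
    apply (Close x d); auto. rewrite Rminus_eq_0, Rabs_R0; auto. }
  replace (w u v - w x y - (wx x y * (u - x) + wy x y * (v - y))) with
    ((w u v - w x v) + (w x v - w x y) - (wx x y * (u - x) + wy x y * (v - y))) by ring.
  rewrite Ec, Ed.
  replace (wx c v * (u - x) + wy x d * (v - y) - (wx x y * (u - x) + wy x y * (v - y))) with
    ((wx c v - wx x y) * (u - x) + (wy x d - wy x y) * (v - y)) by ring.
  eapply Rle_trans. apply Rabs_triang. rewrite !Rabs_mult.
  assert (Rabs (u - x) <= Rmax (Rabs (u - x)) (Rabs (v - y))) by apply Rmax_l.
  assert (Rabs (v - y) <= Rmax (Rabs (u - x)) (Rabs (v - y))) by apply Rmax_r.
  pose proof (Rabs_pos (u - x)). pose proof (Rabs_pos (v - y)).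
  pose proof (Rabs_pos (wx c v - wx x y)). pose proof (Rabs_pos (wy x d - wy x y)).
  set (M := Rmax (Rabs (u - x)) (Rabs (v - y))) in *.
  apply Rle_trans with (eps / 2 * M + eps / 2 * M); [|lra].
  apply Rplus_le_compat; apply Rmult_le_compat; lra.
Qed.


Definition Hr (wx wy : R -> R -> R) (r xi : R) : R :=
  r * (- sin xi * wx (r * cos xi) (r * sin xi) + cos xi * wy (r * cos xi) (r * sin xi)).

Lemma deriv_r w wx wy r xi : C1_cl_B w wx wy -> 0 <= r < 1 ->
  is_derive (fun th => w (r * cos th) (r * sin th)) xi (Hr wx wy r xi).
Proof.
  intros HC Hr1.
  assert (HB : in_B (r * cos xi) (r * sin xi)).
  { unfold in_B. pose proof (sin2_cos2 xi). unfold Rsqr in H.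
    replace ((r * cos xi) ^ 2 + (r * sin xi) ^ 2) with (r * r * (sin xi * sin xi + cos xi * cos xi)) by ring.
    rewrite H. nra. }
  pose proof (diff_interior w wx wy _ _ HC HB) as HD.
  apply is_derive_Reals.
  assert (D1 : derivable_pt_lim (fun t => r * cos t) xi (r * - sin xi)).
  { apply is_derive_Reals. auto_derive; auto. ring. }
  assert (D2 : derivable_pt_lim (fun t => r * sin t) xi (r * cos xi)).
  { apply is_derive_Reals. auto_derive; auto. ring. }
  pose proof (derivable_pt_lim_comp_2d w (fun t => r * cos t) (fun t => r * sin t) xi _ _ _ _ HD D1 D2) as R.
  unfold Hr. replace (r * (- sin xi * wx (r * cos xi) (r * sin xi) + cos xi * wy (r * cos xi) (r * sin xi)))
    with (wx (r * cos xi) (r * sin xi) * (r * - sin xi) + wy (r * cos xi) (r * sin xi) * (r * cos xi)) by ring.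
  exact R.
Qed.

Lemma est r sx cx s0 c0 X Y X0 Y0 e : 0 < e -> 0 <= r <= 1 -> Rabs sx <= 1 -> Rabs cx <= 1 ->
  Rabs (X - X0) < e / 8 -> Rabs (Y - Y0) < e / 8 ->
  Rabs (r - 1) < e / (8 * (Rabs X0 + Rabs Y0 + 1)) ->
  Rabs (sx - s0) < e / (8 * (Rabs X0 + Rabs Y0 + 1)) ->
  Rabs (cx - c0) < e / (8 * (Rabs X0 + Rabs Y0 + 1)) ->
  Rabs (r * (- sx * X + cx * Y) - (- s0 * X0 + c0 * Y0)) < e.
Proof.
  intros He Hr Hs Hc HX HY H1 H2 H3.
  set (K := Rabs X0 + Rabs Y0 + 1) in *.
  assert (HK : 0 < K) by (unfold K; pose proof (Rabs_pos X0); pose proof (Rabs_pos Y0); lra).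
  assert (HK1 : Rabs X0 <= K) by (unfold K; pose proof (Rabs_pos Y0); lra).
  assert (HK2 : Rabs Y0 <= K) by (unfold K; pose proof (Rabs_pos X0); lra).
  assert (HK3 : Rabs X0 + Rabs Y0 <= K) by (unfold K; lra).
  assert (Q : e / (8 * K) * K = e / 8) by (field; lra).
  replace (r * (- sx * X + cx * Y) - (- s0 * X0 + c0 * Y0)) with
    (r * (- sx * (X - X0) + cx * (Y - Y0)) + (r - 1) * (- sx * X0 + cx * Y0)
     + (- (sx - s0) * X0 + (cx - c0) * Y0)) by ring.
  assert (T1 : Rabs (r * (- sx * (X - X0) + cx * (Y - Y0))) <= e / 4).
  { rewrite Rabs_mult. rewrite (Rabs_right r) by lra.
    assert (Rabs (- sx * (X - X0) + cx * (Y - Y0)) <= e / 4).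
    { eapply Rle_trans. apply Rabs_triang. rewrite !Rabs_mult, Rabs_Ropp.
      pose proof (Rabs_pos sx). pose proof (Rabs_pos cx).
      pose proof (Rabs_pos (X - X0)). pose proof (Rabs_pos (Y - Y0)).
      assert (Rabs sx * Rabs (X - X0) <= e / 8) by nra.
      assert (Rabs cx * Rabs (Y - Y0) <= e / 8) by nra. lra. }
    pose proof (Rabs_pos (- sx * (X - X0) + cx * (Y - Y0))). nra. }
  assert (T2 : Rabs ((r - 1) * (- sx * X0 + cx * Y0)) <= e / 8).
  { rewrite Rabs_mult.
    assert (Rabs (- sx * X0 + cx * Y0) <= K).
    { eapply Rle_trans. apply Rabs_triang. rewrite !Rabs_mult, Rabs_Ropp.
      pose proof (Rabs_pos sx). pose proof (Rabs_pos cx).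
      pose proof (Rabs_pos X0). pose proof (Rabs_pos Y0).
      assert (Rabs sx * Rabs X0 <= Rabs X0) by nra.
      assert (Rabs cx * Rabs Y0 <= Rabs Y0) by nra. lra. }
    pose proof (Rabs_pos (r - 1)). pose proof (Rabs_pos (- sx * X0 + cx * Y0)).
    rewrite <- Q. apply Rmult_le_compat; lra. }
  assert (T3 : Rabs (- (sx - s0) * X0 + (cx - c0) * Y0) <= e / 4).
  { eapply Rle_trans. apply Rabs_triang. rewrite !Rabs_mult, Rabs_Ropp.
    pose proof (Rabs_pos (sx - s0)). pose proof (Rabs_pos (cx - c0)).
    pose proof (Rabs_pos X0). pose proof (Rabs_pos Y0).
    assert (Rabs (sx - s0) * Rabs X0 <= e / 8) by (rewrite <- Q; apply Rmult_le_compat; lra).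
    assert (Rabs (cx - c0) * Rabs Y0 <= e / 8) by (rewrite <- Q; apply Rmult_le_compat; lra).
    lra. }
  eapply Rle_lt_trans. apply Rabs_triang.
  eapply Rle_lt_trans. apply Rplus_le_compat_r. apply Rabs_triang.
  lra.
Qed.

Lemma on_circle_cl th : in_cl_B (cos th) (sin th).
Proof. unfold in_cl_B. pose proof (sin2_cos2 th). unfold Rsqr in H. nra. Qed.

Lemma abs_le1 a : -1 <= a <= 1 -> Rabs a <= 1.
Proof. intros; apply Rabs_le; lra. Qed.

Lemma bdry w wx wy th0 : C1_cl_B w wx wy ->
  is_derive (fun th => w (cos th) (sin th)) th0
    (- sin th0 * wx (cos th0) (sin th0) + cos th0 * wy (cos th0) (sin th0)).
Proof.
  intros HC. pose proof HC as [Hw [Hwx [Hwy Hd]]].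
  apply is_derive_Reals. intros eps Heps.
  set (c0 := cos th0) in *. set (s0 := sin th0) in *.
  set (X0 := wx c0 s0). set (Y0 := wy c0 s0).
  set (e := eps / 2).
  assert (He : 0 < e) by (unfold e; lra).
  set (K := Rabs X0 + Rabs Y0 + 1).
  assert (HK : 0 < K) by (unfold K; pose proof (Rabs_pos X0); pose proof (Rabs_pos Y0); lra).
  set (e1 := e / (8 * K)).
  assert (He1 : 0 < e1) by (unfold e1; apply Rdiv_lt_0_compat; lra).
  assert (He8 : 0 < e / 8) by lra.
  destruct (Hwx c0 s0 (on_circle_cl th0) (e / 8) He8) as [ex [Hex Px]].
  destruct (Hwy c0 s0 (on_circle_cl th0) (e / 8) He8) as [ey [Hey Py]].
  set (eta := Rmin ex ey).
  assert (Heta : 0 < eta) by (unfold eta; apply Rmin_case; lra).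
  assert (Heta1 : eta <= ex) by apply Rmin_l. assert (Heta2 : eta <= ey) by apply Rmin_r.
  set (e2 := Rmin e1 (eta / 4)).
  assert (He2 : 0 < e2) by (unfold e2; apply Rmin_case; lra).
  assert (He2a : e2 <= e1) by apply Rmin_l. assert (He2b : e2 <= eta / 4) by apply Rmin_r.
  destruct (proj1 (cp_eps cos th0) (continuity_cos th0) e2 He2) as [dc [Hdc Pc]].
  destruct (proj1 (cp_eps sin th0) (continuity_sin th0) e2 He2) as [ds [Hds Ps]].
  set (d0 := Rmin (Rmin dc ds) (Rmin e2 1)).
  assert (Hd0 : 0 < d0) by (unfold d0; repeat apply Rmin_case; lra).
  assert (Hd0a : d0 <= dc) by (unfold d0; eapply Rle_trans; [apply Rmin_l| apply Rmin_l]).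
  assert (Hd0b : d0 <= ds) by (unfold d0; eapply Rle_trans; [apply Rmin_l| apply Rmin_r]).
  assert (Hd0c : d0 <= e2) by (unfold d0; eapply Rle_trans; [apply Rmin_r| apply Rmin_l]).
  assert (Hd0d : d0 <= 1) by (unfold d0; eapply Rle_trans; [apply Rmin_r| apply Rmin_r]).
  assert (Step1 : forall r xi, 1 - d0 < r < 1 -> Rabs (xi - th0) < d0 ->
     Rabs (Hr wx wy r xi - (- s0 * X0 + c0 * Y0)) < e).
  { intros r xi Hr1 Hxi. unfold Hr.
    pose proof (Pc xi ltac:(lra)) as Cc. pose proof (Ps xi ltac:(lra)) as Cs.
    fold c0 in Cc. fold s0 in Cs.
    pose proof (COS_bound xi). pose proof (SIN_bound xi).
    assert (Hcl : in_cl_B (r * cos xi) (r * sin xi)).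
    { unfold in_cl_B. pose proof (sin2_cos2 xi). unfold Rsqr in H1.
      replace ((r * cos xi) ^ 2 + (r * sin xi) ^ 2) with (r * r * (sin xi * sin xi + cos xi * cos xi)) by ring.
      rewrite H1. nra. }
    assert (Dst : (r * cos xi - c0) ^ 2 + (r * sin xi - s0) ^ 2 < eta ^ 2).
    { apply Rabs_def2 in Cc. apply Rabs_def2 in Cs.
      assert (A1 : - (eta / 2) < r * cos xi - c0 < eta / 2).
      { assert (- d0 < (r - 1) * cos xi < d0) by nra. lra. }
      assert (A2 : - (eta / 2) < r * sin xi - s0 < eta / 2).
      { assert (- d0 < (r - 1) * sin xi < d0) by nra. lra. }
      assert ((r * cos xi - c0) ^ 2 < (eta / 2) ^ 2) by nra.
      assert ((r * sin xi - s0) ^ 2 < (eta / 2) ^ 2) by nra.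
      assert ((eta / 2) ^ 2 = eta ^ 2 / 4) by field.
      assert (0 < eta ^ 2) by (apply pow_lt; lra). lra. }
    assert (eta ^ 2 <= ex ^ 2) by (apply pow_incr; lra).
    assert (eta ^ 2 <= ey ^ 2) by (apply pow_incr; lra).
    apply est; try lra.
    - apply abs_le1; auto.
    - apply abs_le1; auto.
    - apply Px; auto. lra.
    - apply Py; auto. lra.
    - fold K. fold e1. apply Rabs_def1; lra.
    - fold K. fold e1. lra.
    - fold K. fold e1. lra. }
  exists (mkposreal d0 Hd0). simpl. intros h Hh0 Hh.
  set (gam := e * Rabs h / 4).
  assert (Hgam : 0 < gam) by (unfold gam; pose proof (Rabs_pos_lt h Hh0); apply Rdiv_lt_0_compat; nra).
  destruct (Hw (cos (th0 + h)) (sin (th0 + h)) (on_circle_cl _) gam Hgam) as [n1 [Hn1 Q1]].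
  destruct (Hw c0 s0 (on_circle_cl th0) gam Hgam) as [n2 [Hn2 Q2]].
  set (m := Rmin d0 (Rmin n1 n2)).
  assert (Hm : 0 < m) by (unfold m; repeat apply Rmin_case; lra).
  assert (Hma : m <= d0) by apply Rmin_l.
  assert (Hmb : m <= n1) by (unfold m; eapply Rle_trans; [apply Rmin_r| apply Rmin_l]).
  assert (Hmc : m <= n2) by (unfold m; eapply Rle_trans; [apply Rmin_r| apply Rmin_r]).
  set (r := 1 - m / 2).
  assert (Hr1 : 1 - d0 < r < 1) by (unfold r; lra).
  assert (Rad : forall th n, m <= n -> 0 < n ->
     (r * cos th - cos th) ^ 2 + (r * sin th - sin th) ^ 2 < n ^ 2).
  { intros th n Hn Hn0. pose proof (sin2_cos2 th). unfold Rsqr in H.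
    replace ((r * cos th - cos th) ^ 2 + (r * sin th - sin th) ^ 2) with ((r - 1) ^ 2 * (sin th * sin th + cos th * cos th)) by ring.
    rewrite H. unfold r. nra. }
  assert (Incl : forall th, in_cl_B (r * cos th) (r * sin th)).
  { intro th. unfold in_cl_B. pose proof (sin2_cos2 th). unfold Rsqr in H.
    replace ((r * cos th) ^ 2 + (r * sin th) ^ 2) with (r * r * (sin th * sin th + cos th * cos th)) by ring.
    rewrite H. nra. }
  pose proof (Q1 _ _ (Incl (th0 + h)) (Rad (th0 + h) n1 Hmb Hn1)) as G1.
  pose proof (Q2 _ _ (Incl th0) (Rad th0 n2 Hmc Hn2)) as G2.
  fold c0 s0 in G2.
  destruct (MVT_gen (fun t => w (r * cos t) (r * sin t)) th0 (th0 + h) (Hr wx wy r)) as [xi [Hxi Exi]].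
  { assert (Hr01 : 0 <= r < 1) by lra. intros t _. exact (deriv_r w wx wy r t HC Hr01). }
  { assert (Hr01 : 0 <= r < 1) by lra. intros t _. apply cont_to_pt. eexists. exact (deriv_r w wx wy r t HC Hr01). }
  simpl in Exi. fold c0 s0 in Exi.
  assert (Hxi2 : Rabs (xi - th0) < d0).
  { apply Rabs_def2 in Hh. revert Hxi. apply Rmin_case; apply Rmax_case; intros; apply Rabs_def1; lra. }
  pose proof (Step1 r xi Hr1 Hxi2) as S1.
  set (A := w (cos (th0 + h)) (sin (th0 + h))) in *.
  set (A' := w (r * cos (th0 + h)) (r * sin (th0 + h))) in *.
  set (B := w c0 s0) in *.
  set (B' := w (r * c0) (r * s0)) in *.
  set (HH := Hr wx wy r xi) in *.
  replace ((A - B) / h - (- s0 * X0 + c0 * Y0)) with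
    ((HH - (- s0 * X0 + c0 * Y0)) + ((A - A') - (B - B')) * / h).
  2:{ replace (th0 + h - th0) with h in Exi by ring.
      replace (A - B) with ((A - A') - (B - B') + (A' - B')) by ring. rewrite Exi. field; auto. }
  eapply Rle_lt_trans. apply Rabs_triang.
  rewrite Rabs_mult, Rabs_inv.
  assert (Hah : 0 < Rabs h) by (apply Rabs_pos_lt; auto).
  assert (Rabs ((A - A') - (B - B')) < 2 * gam).
  { eapply Rle_lt_trans. apply Rabs_triang. rewrite Rabs_Ropp.
    rewrite Rabs_minus_sym in G1. rewrite Rabs_minus_sym in G2. lra. }
  assert (Rabs ((A - A') - (B - B')) * / Rabs h < e / 2).
  { apply Rmult_lt_reg_r with (Rabs h); auto. rewrite Rmult_assoc, Rinv_l by lra.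
    unfold gam in *. lra. }
  unfold e in *. lra.
Qed.


Lemma cderiv_eps (f : C -> C) (z l : C) : is_derive (K := C_AbsRing) (V := C_NormedModule) f z l ->
  forall eps, 0 < eps -> exists d, 0 < d /\ forall w : C,
    Cmod (w - z)%C < d ->
    Cmod (f w - f z - (w - z) * l)%C <= eps * Cmod (w - z)%C.
Proof.
  intros [_ H] eps Heps.
  specialize (H z (fun P HP => HP)).
  specialize (H (mkposreal eps Heps)).
  destruct H as [d Hd].
  exists d. split. apply cond_pos. intros w H1.
  specialize (Hd w). simpl in Hd.
  assert (Hb : @ball (AbsRing_UniformSpace C_AbsRing) z d w) by exact H1.
  exact (Hd Hb).
Qed.

Lemma deriv_from_bound f x l :
  (forall eps, 0 < eps -> exists d, 0 < d /\ forall h, Rabs h < d ->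
     Rabs (f (x + h) - f x - h * l) <= eps * Rabs h) -> derivable_pt_lim f x l.
Proof.
  intros H eps Heps.
  destruct (H (eps / 2) ltac:(lra)) as [d [Hd P]].
  exists (mkposreal d Hd). simpl. intros h Hh0 Hh.
  specialize (P h Hh).
  assert (Ha : 0 < Rabs h) by (apply Rabs_pos_lt; auto).
  replace ((f (x + h) - f x) / h - l) with ((f (x + h) - f x - h * l) * / h) by (field; auto).
  rewrite Rabs_mult, Rabs_inv.
  apply Rmult_lt_reg_r with (Rabs h); auto. rewrite Rmult_assoc, Rinv_l by lra. nra.
Qed.

Lemma im_le_Cmod' (c : C) : Rabs (Im c) <= Cmod c.
Proof. eapply Rle_trans; [|apply Rmax_Cmod]. apply Rmax_r. Qed.

Lemma CR (u ut : R -> R -> R) x y (l : C) :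
  is_derive (K := C_AbsRing) (V := C_NormedModule)
     (fun w : C => (u (fst w) (snd w), ut (fst w) (snd w)) : C) (x, y) l ->
  derivable_pt_lim (fun t => u t y) x (fst l) /\
  derivable_pt_lim (fun t => ut t y) x (snd l) /\
  derivable_pt_lim (fun t => u x t) y (- snd l) /\
  derivable_pt_lim (fun t => ut x t) y (fst l).
Proof.
  intro H. pose proof (cderiv_eps _ _ _ H) as E.
  assert (Hre : forall h : R, ((@pair R R (x + h)%R y) - (x, y))%C = RtoC h).
  { intro h. unfold Cminus, Cplus, Copp, RtoC. simpl. f_equal; ring. }
  assert (Him : forall h : R, ((@pair R R x (y + h)%R) - (x, y))%C = (RtoC h * Ci)%C).
  { intro h. unfold Cminus, Cplus, Copp, RtoC, Cmult, Ci. simpl. f_equal; ring. }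
  assert (Mre : forall h : R, Cmod (RtoC h) = Rabs h) by (intro; apply Cmod_R).
  assert (Mim : forall h : R, Cmod (RtoC h * Ci)%C = Rabs h).
  { intro h. rewrite Cmod_mult, Cmod_Ci, Cmod_R. ring. }
  repeat split; apply deriv_from_bound; intros eps Heps; destruct (E eps Heps) as [d [Hd P]];
    exists d; split; auto; intros h Hh.
  - specialize (P (@pair R R (x + h)%R y)). rewrite Hre, Mre in P. specialize (P Hh).
    eapply Rle_trans; [|exact P]. eapply Rle_trans; [|apply re_le_Cmod].
    right. f_equal. simpl. ring.
  - specialize (P (@pair R R (x + h)%R y)). rewrite Hre, Mre in P. specialize (P Hh).
    eapply Rle_trans; [|exact P]. eapply Rle_trans; [|apply im_le_Cmod'].
    right. f_equal. simpl. ring.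
  - specialize (P (@pair R R x (y + h)%R)). rewrite Him, Mim in P. specialize (P Hh).
    eapply Rle_trans; [|exact P]. eapply Rle_trans; [|apply re_le_Cmod].
    right. f_equal. simpl. ring.
  - specialize (P (@pair R R x (y + h)%R)). rewrite Him, Mim in P. specialize (P Hh).
    eapply Rle_trans; [|exact P]. eapply Rle_trans; [|apply im_le_Cmod'].
    right. f_equal. simpl. ring.
Qed.


Lemma circ_cont F th : cont_on_cl_B F -> continuity_pt (fun t => F (cos t) (sin t)) th.
Proof.
  intro HF. apply cp_eps. intros eps He.
  destruct (HF _ _ (on_circle_cl th) eps He) as [eta [Heta P]].
  assert (He2 : 0 < eta / 2) by lra.
  destruct (proj1 (cp_eps cos th) (continuity_cos th) _ He2) as [dc [Hdc Pc]].
  destruct (proj1 (cp_eps sin th) (continuity_sin th) _ He2) as [ds [Hds Ps]].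
  exists (Rmin dc ds). split. apply Rmin_case; lra.
  intros t Ht. apply P. apply on_circle_cl.
  assert (Rmin dc ds <= dc) by apply Rmin_l. assert (Rmin dc ds <= ds) by apply Rmin_r.
  pose proof (Pc t ltac:(lra)) as A. pose proof (Ps t ltac:(lra)) as B.
  apply Rabs_def2 in A. apply Rabs_def2 in B.
  assert ((cos t - cos th) ^ 2 < (eta / 2) ^ 2) by nra.
  assert ((sin t - sin th) ^ 2 < (eta / 2) ^ 2) by nra.
  assert ((eta / 2) ^ 2 = eta ^ 2 / 4) by field.
  assert (0 < eta ^ 2) by (apply pow_lt; lra). lra.
Qed.

Lemma den_gen d1 d2 e2 : (d1 = 0 -> 0 < d2 * e2) -> 0 < d1 ^ 2 + d2 ^ 2 ->
  0 < sqrt (d1 ^ 2 + d2 ^ 2) * sqrt (d1 ^ 2 + e2 ^ 2) + (d1 * d1 + d2 * e2).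
Proof.
  intros H0 HA.
  pose proof (sqrt_pos (d1 ^ 2 + d2 ^ 2)). pose proof (sqrt_pos (d1 ^ 2 + e2 ^ 2)).
  destruct (Rlt_or_le 0 (d1 * d1 + d2 * e2)) as [Hp|Hp].
  - assert (0 <= sqrt (d1 ^ 2 + d2 ^ 2) * sqrt (d1 ^ 2 + e2 ^ 2)) by (apply Rmult_le_pos; auto). lra.
  - assert (Hd1 : d1 <> 0). { intro E. specialize (H0 E). subst. lra. }
    assert (He : e2 <> d2). { intro E. subst. nra. }
    rewrite <- sqrt_mult by nra.
    assert (E : (d1 ^ 2 + d2 ^ 2) * (d1 ^ 2 + e2 ^ 2) =
                (d1 * d1 + d2 * e2) ^ 2 + (d1 * (e2 - d2)) ^ 2) by ring.
    rewrite E.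
    assert (Hc : 0 < (d1 * (e2 - d2)) ^ 2).
    { rewrite <- Rsqr_pow2. apply Rsqr_pos_lt. apply Rmult_integral_contrapositive_currified; lra. }
    assert (sqrt ((d1 * d1 + d2 * e2) ^ 2) = - (d1 * d1 + d2 * e2)).
    { replace ((d1 * d1 + d2 * e2) ^ 2) with ((- (d1 * d1 + d2 * e2)) ^ 2) by ring. apply sqrt_pow2. lra. }
    assert (sqrt ((d1 * d1 + d2 * e2) ^ 2) < sqrt ((d1 * d1 + d2 * e2) ^ 2 + (d1 * (e2 - d2)) ^ 2)).
    { apply sqrt_lt_1_alt. split. apply pow2_ge_0. lra. }
    lra.
Qed.

Lemma pt_alg c s a b p q : c ^ 2 + s ^ 2 = 1 -> a * q - b * p > 0 ->
  0 < (- s * a + c * b) ^ 2 + (- s * p + c * q) ^ 2 /\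
  0 < (- s * a + c * b) ^ 2 + (- s * - b + c * a) ^ 2 /\
  (- s * a + c * b = 0 -> 0 < (- s * p + c * q) * (- s * - b + c * a)).
Proof.
  intros Hcs Hd.
  set (d1 := - s * a + c * b). set (d2 := - s * p + c * q). set (e2 := - s * - b + c * a).
  assert (I1 : c * (a * q - b * p) = a * d2 - p * d1) by (unfold d1, d2; ring).
  assert (I2 : s * (a * q - b * p) = b * d2 - q * d1) by (unfold d1, d2; ring).
  assert (I3 : d1 ^ 2 + e2 ^ 2 = (a ^ 2 + b ^ 2) * (c ^ 2 + s ^ 2)) by (unfold d1, e2; ring).
  assert (I4 : d2 * e2 = (a * q - b * p) * (c ^ 2 + s ^ 2) + (s * q + c * p) * d1) by (unfold d1, d2, e2; ring).
  rewrite Hcs in I3, I4.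
  split; [|split].
  - destruct (Rlt_or_le 0 (d1 ^ 2 + d2 ^ 2)) as [h|h]; [exact h|].
    assert (d1 = 0) by nra. assert (d2 = 0) by nra.
    rewrite H, H0 in I1, I2.
    assert (E1 : c * (a * q - b * p) = 0) by lra. assert (E2 : s * (a * q - b * p) = 0) by lra.
    apply Rmult_integral in E1. apply Rmult_integral in E2.
    destruct E1 as [E1|E1]; [|lra]. destruct E2 as [E2|E2]; [|lra]. subst. lra.
  - rewrite I3, Rmult_1_r. destruct (Rlt_or_le 0 (a ^ 2 + b ^ 2)) as [h|h]; [exact h|].
    pose proof (pow2_ge_0 a). pose proof (pow2_ge_0 b).
    assert (Ea : a * a = 0) by lra. assert (Eb : b * b = 0) by lra.
    apply Rmult_integral in Ea. apply Rmult_integral in Eb.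
    assert (a = 0) by (destruct Ea; auto). assert (b = 0) by (destruct Eb; auto). subst. lra.
  - intro H. rewrite I4, H. lra.
Qed.


Theorem theorem3p9
  (u v ux uy vx vy ut : R -> R -> R)
  (hu1 : C1_cl_B u ux uy) (hv1 : C1_cl_B v vx vy)
  (hu : harmonic_on_B u) (hv : harmonic_on_B v)
  (hconj : harmonic_conjugate_on_B u ut)
  (hut : cont_on_cl_B ut)
  (hdet : forall x y, on_dB x y -> ux x y * vy x y - uy x y * vx x y > 0) :
  exists k : Z,
    is_WN (fun th => u (cos th) (sin th)) (fun th => ut (cos th) (sin th)) k /\
    is_WN (fun th => u (cos th) (sin th)) (fun th => v (cos th) (sin th)) k.
Proof.
  assert (Hut1 : C1_cl_B ut (fun x y => - uy x y) ux).
  { destruct hu1 as [Hu [Hux [Huy Hd]]].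
    split; [exact hut|]. split.
    { intros x y Hxy eps He. destruct (Huy x y Hxy eps He) as [d [Hd0 P]].
      exists d; split; auto. intros x' y' H1 H2. specialize (P x' y' H1 H2).
      replace (- uy x' y' - - uy x y) with (- (uy x' y' - uy x y)) by ring. rewrite Rabs_Ropp; auto. }
    split; [exact Hux|].
    intros x y HB.
    destruct (hconj (x, y) HB) as [l Hl].
    destruct (CR u ut x y l Hl) as [C1 [C2 [C3 C4]]].
    destruct (Hd x y HB) as [D1 D2].
    apply is_derive_Reals in D1. apply is_derive_Reals in D2.
    assert (E1 : ux x y = fst l) by (eapply uniqueness_limite; eauto).
    assert (E2 : uy x y = - snd l) by (eapply uniqueness_limite; eauto).
    split; apply is_derive_Reals.
    - replace (- uy x y) with (snd l) by lra. exact C2.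
    - rewrite E1. exact C4. }
  set (d1 := fun th => - sin th * ux (cos th) (sin th) + cos th * uy (cos th) (sin th)).
  set (d2 := fun th => - sin th * vx (cos th) (sin th) + cos th * vy (cos th) (sin th)).
  set (e2 := fun th => - sin th * - uy (cos th) (sin th) + cos th * ux (cos th) (sin th)).
  assert (Dd1 : forall t, is_derive (fun th => u (cos th) (sin th)) t (d1 t)) by (intro; apply bdry; auto).
  assert (Dd2 : forall t, is_derive (fun th => v (cos th) (sin th)) t (d2 t)) by (intro; apply bdry; auto).
  assert (De2 : forall t, is_derive (fun th => ut (cos th) (sin th)) t (e2 t))
    by (intro; exact (bdry ut (fun x y => - uy x y) ux t Hut1)).
  destruct hu1 as [_ [Hux [Huy _]]]. destruct hv1 as [_ [Hvx [Hvy _]]].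
  assert (Cd1 : forall t, continuity_pt d1 t).
  { intro t. unfold d1. apply cp_plus; apply cp_mult.
    apply cp_opp, cp_sin, cp_id. apply circ_cont; auto.
    apply cp_cos, cp_id. apply circ_cont; auto. }
  assert (Cd2 : forall t, continuity_pt d2 t).
  { intro t. unfold d2. apply cp_plus; apply cp_mult.
    apply cp_opp, cp_sin, cp_id. apply circ_cont; auto.
    apply cp_cos, cp_id. apply circ_cont; auto. }
  assert (Ce2 : forall t, continuity_pt e2 t).
  { intro t. unfold e2. apply cp_plus; apply cp_mult.
    apply cp_opp, cp_sin, cp_id. apply cp_opp. apply circ_cont; auto.
    apply cp_cos, cp_id. apply circ_cont; auto. }
  assert (Alg : forall t, 0 < d1 t ^ 2 + d2 t ^ 2 /\ 0 < d1 t ^ 2 + e2 t ^ 2 /\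
                         (d1 t = 0 -> 0 < d2 t * e2 t)).
  { intro t. unfold d1, d2, e2. apply pt_alg.
    - pose proof (sin2_cos2 t). unfold Rsqr in H. lra.
    - apply hdet. unfold on_dB. pose proof (sin2_cos2 t). unfold Rsqr in H. lra. }
  destruct (WN_pair d1 d2 e2 Cd1 Cd2 Ce2) as [k [phi [psi [Hphi [Hpsi [Lphi [Lpsi [Kphi Kpsi]]]]]]]].
  - intro t. apply Alg.
  - intro t. apply Alg.
  - intro t. apply den_gen; apply Alg.
  - unfold d1. rewrite cos_2PI, sin_2PI, cos_0, sin_0. reflexivity.
  - unfold d2. rewrite cos_2PI, sin_2PI, cos_0, sin_0. reflexivity.
  - unfold e2. rewrite cos_2PI, sin_2PI, cos_0, sin_0. reflexivity.
  - exists k. split.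
    + exists d1, e2, psi. split; [|split; [auto|split; auto]].
      intros t Ht. split; [auto|split; [auto|split; [auto|split; [auto|]]]].
      intro E. injection E. intros. destruct (Alg t) as [_ [A _]]. rewrite H, H0 in A. lra.
    + exists d1, d2, phi. split; [|split; [auto|split; auto]].
      intros t Ht. split; [auto|split; [auto|split; [auto|split; [auto|]]]].
      intro E. injection E. intros. destruct (Alg t) as [A _]. rewrite H, H0 in A. lra.
Qed.
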